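(* Let $\ell\ge 3$ be an odd integer, let $k=\binom{\ell}{(\ell-1)/2}$, and let $n>k$. Define \[ \mathcal{J}=\{S\subseteq[\ell]: |S|\le \tfrac{\ell-1}{2}\},\quad \mathcal{K}=\{S\cup\{\ell+1,\dots,\ell+t\}: 1\le t\le n-\ell,\ S\subseteq[\ell],\ |S|=\tfrac{\ell-1}{2}\}, \] \[ \mathcal{L}=\{S\cup\{\ell+1,\dots,n\}: S\subseteq[\ell],\ |S|\ge \tfrac{\ell+1}{2}\}. \] Then $\mathcal{F}=\mathcal{J}\cup\mathcal{K}\cup\mathcal{L}$ is induced-$\mathcal{A}_{k+1}$-saturated in $\mathcal{B}_n$, and $|\mathcal{F}|=2^\ell+(n-\ell)k$. Consequently $\mathrm{isat}(n,\mathcal{A}_{k+1})\le 2^\ell+(n-\ell)k$.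
   Context: $\mathcal{B}_n$ denotes the Boolean lattice $(2^{[n]},\subseteq)$, $[n]=\{1,\dots,n\}$. A poset $\mathcal{P}'$ is an induced subposet of $\mathcal{P}$ if there is an injection $f$ with $u\le' v\iff f(u)\le f(v)$. A family $\mathcal{F}\subseteq 2^{[n]}$ (ordered by inclusion) is induced-$\mathcal{P}$-saturated if it contains no induced copy of $\mathcal{P}$ but every strictly larger family $\mathcal{F}'\subseteq 2^{[n]}$ does. $\mathrm{isat}(n,\mathcal{P})$ is the minimum size of such a family. $\mathcal{A}_m$ is the $m$-element antichain. *)

(* Defs.v *)
(* The ground set [n] = {1,...,n} is modelled by 'I_n,
   the element i+1 of [n] corresponding to the ordinal i. *)
From mathcomp Require Import all_boot.
From Stdlib Require Import ClassicalDescription.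
Set Implicit Arguments. Unset Strict Implicit. Unset Printing Implicit Defensive.

(* F contains an induced copy of the m-element antichain A_m:
   an injection f : A_m -> F with (u <= v in A_m, i.e. u = v) <-> f u \subset f v. *)
Definition has_induced_antichain (n m : nat) (F : {set {set 'I_n}}) : Prop :=
  exists f : 'I_m -> {set 'I_n},
    injective f /\ (forall i, f i \in F) /\ (forall i j, i = j <-> f i \subset f j).

Definition induced_antichain_saturated (n m : nat) (F : {set {set 'I_n}}) : Prop :=
  ~ has_induced_antichain m F /\
  forall G : {set {set 'I_n}}, F \proper G -> has_induced_antichain m G.

Definition sat_b (n m : nat) (G : {set {set 'I_n}}) : bool :=
  if excluded_middle_informative (induced_antichain_saturated m G) then true else false.

(* isat(n, A_m): minimum size of an induced-A_m-saturated family in B_n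
   (the default 2^(2^n).+1 is never attained since such families exist). *)
Definition isat_antichain (n m : nat) : nat :=
  \big[minn/(2 ^ (2 ^ n)).+1]_(G : {set {set 'I_n}} | sat_b m G) #|G|.

Definition lowset (n l : nat) : {set 'I_n} := [set i : 'I_n | i < l].
(* {a+1, ..., b} inside [n] *)
Definition segment (n a b : nat) : {set 'I_n} := [set i : 'I_n | a <= i < b].

Definition famJ (n l : nat) : {set {set 'I_n}} :=
  [set S : {set 'I_n} | (S \subset lowset n l) && (#|S| <= (l.-1)./2)].

Definition famK (n l : nat) : {set {set 'I_n}} :=
  [set X : {set 'I_n} | [exists t : 'I_n.+1, exists S : {set 'I_n},
     [&& 1 <= t <= n - l, S \subset lowset n l, #|S| == (l.-1)./2 &
         X == S :|: segment n l (l + t)]]].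

Definition famL (n l : nat) : {set {set 'I_n}} :=
  [set X : {set 'I_n} | [exists S : {set 'I_n},
     [&& S \subset lowset n l, (l.+1)./2 <= #|S| & X == S :|: segment n l n]]].

Definition famF (n l : nat) : {set {set 'I_n}} := famJ n l :|: famK n l :|: famL n l.

(* Main.v *)
Require Import Defs.
From mathcomp Require Import all_boot zify.
From Stdlib Require Import ClassicalDescription.
Set Implicit Arguments. Unset Strict Implicit. Unset Printing Implicit Defensive.

Section LYM.
Variable T : finType.

Definition antichainS (P : {set {set T}}) :=
  forall A B, A \in P -> B \in P -> A \subset B -> A = B.

Lemma lym N : forall (U : {set T}) (P : {set {set T}}), #|U| = N ->
  (forall A, A \in P -> A \subset U) -> antichainS P ->
  \sum_(A in P) (#|A|)`! * (N - #|A|)`! <= N`!.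
Proof.
elim: N => [|N IH] U P HU HPU HP.
  rewrite (eq_bigr (fun _ => 1)); last first.
    move=> A HA; have : #|A| <= 0 by rewrite -HU subset_leq_card ?HPU.
    by rewrite leqn0 => /eqP ->.
  rewrite sum_nat_const muln1.
  have : P \subset [set set0].
    apply/subsetP=> A HA; rewrite inE; apply/eqP.
    have : #|A| <= 0 by rewrite -HU subset_leq_card ?HPU.
    by rewrite leqn0 cards_eq0 => /eqP.
  by move/subset_leq_card; rewrite cards1.
case: (boolP (U \in P)) => HUP.
  have -> : P = [set U].
    apply/setP=> A; rewrite inE; apply/idP/eqP=> [HA|->//].
    by apply: HP => //; apply: HPU.
  by rewrite big_set1 HU subnn fact0 muln1.
have Hlt : forall A, A \in P -> #|A| < N.+1.
  move=> A HA; rewrite -HU proper_card //; rewrite properEneq HPU // andbT.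
  by apply/negP=> /eqP E; rewrite -E HA in HUP.
have E : forall A, A \in P -> (#|A|)`! * (N.+1 - #|A|)`! = \sum_(x in U) (if x \notin A then (#|A|)`! * (N - #|A|)`! else 0).
  move=> A HA.
  rewrite -big_mkcondr /=.
  set c := _ * (N - _)`!.
  rewrite (sum_nat_const [pred x in U | x \notin A] c).
  have -> : #|[pred x in U | x \notin A]| = N.+1 - #|A|.
    rewrite -HU -(cardsID A U) (setIidPr (HPU A HA)) addKn.
    by apply: eq_card => x; rewrite !inE andbC.
  have HAN : #|A| <= N by rewrite -ltnS Hlt.
  rewrite /c (subSn HAN) (factS (N - #|A|)).
  by rewrite mulnCA.
rewrite (eq_bigr _ E).
rewrite exchange_big /=.
have -> : (N.+1)`! = \sum_(x in U) N`!.
  by rewrite (sum_nat_const (mem U) (N`!)) HU (factS N).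
apply: leq_sum => x Hx.
rewrite -big_mkcondr /=.
pose Px := [set A in P | x \notin A].
have -> : \sum_(i in P | x \notin i) (#|i|)`! * (N - #|i|)`! =
          \sum_(A in Px) (#|A|)`! * (N - #|A|)`!.
  by apply: eq_bigl => A; rewrite inE.
apply: (IH (U :\ x)).
- by move: HU; rewrite (cardsD1 x U) Hx add1n => -[].
- move=> A; rewrite inE => /andP[HA HxA]; apply/subsetP=> y Hy.
  rewrite !inE (subsetP (HPU A HA)) // andbT.
  by apply/eqP=> E'; rewrite -E' Hy in HxA.
- move=> A B; rewrite !inE => /andP[HA _] /andP[HB _]; exact: HP.
Qed.

Lemma fact_mid m a : a <= m.*2.+1 -> m`! * (m.+1)`! <= a`! * (m.*2.+1 - a)`!.
Proof.
wlog Ha : a / a <= m.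
  move=> W Hle; case: (leqP a m) => H; first exact: W.
  have Hb : m.*2.+1 - a <= m by lia.
  by have := W _ Hb (leq_subr _ _); rewrite subKn // [X in _ <= X]mulnC.
move=> _.
have gen : forall d b, b + d = m -> m`! * (m.+1)`! <= b`! * (m.*2.+1 - b)`!.
  elim=> [|d IHd] b Hb.
    by rewrite addn0 in Hb; rewrite Hb (_ : m.*2.+1 - m = m.+1) //; lia.
  apply: leq_trans (IHd b.+1 _) _; first by lia.
  have -> : m.*2.+1 - b = (m.*2 - b).+1 by lia.
  have -> : m.*2.+1 - b.+1 = m.*2 - b by lia.
  rewrite (factS b) (factS (m.*2 - b)).
  rewrite [b.+1 * _]mulnC -mulnA [(m.*2 - b).+1 * _]mulnC.
  rewrite [b.+1 * _]mulnC; apply: leq_mul (leqnn _) _; apply: leq_mul (leqnn _) _; lia.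
by apply: (gen (m - a)); lia.
Qed.

Lemma sperner m (U : {set T}) (P : {set {set T}}) : #|U| = m.*2.+1 ->
  (forall A, A \in P -> A \subset U) -> antichainS P -> #|P| <= 'C(m.*2.+1, m).
Proof.
move=> HU HPU HP.
have := lym HU HPU HP.
rewrite -(bin_fact (_ : m <= m.*2.+1)); last by lia.
have -> : m.*2.+1 - m = m.+1 by lia.
move=> H; rewrite -(leq_pmul2r (_ : 0 < m`! * (m.+1)`!)); last by rewrite muln_gt0 !fact_gt0.
apply: leq_trans H; rewrite -sum_nat_const; apply: leq_sum => A HA.
apply: fact_mid; rewrite -HU; exact: subset_leq_card (HPU A HA).
Qed.
End LYM.
Section Fam.
Variables n l m : nat.
Hypothesis Hm1 : (l.-1)./2 = m.
Hypothesis Hm2 : (l.+1)./2 = m.+1.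
Hypothesis Hln : l < n.

Local Notation low := (lowset n l).
Local Notation T t := (segment n l (l + t)).

Lemma in_low (x : 'I_n) : (x \in low) = (x < l).
Proof. by rewrite inE. Qed.

Lemma in_T t (x : 'I_n) : (x \in T t) = (l <= x < l + t).
Proof. by rewrite inE. Qed.

Lemma T0 : T 0 = set0.
Proof. apply/setP=> x; rewrite in_T inE; lia. Qed.

Lemma T_sub t u : t <= u -> T t \subset T u.
Proof. move=> H; apply/subsetP=> x; rewrite !in_T; lia. Qed.

Lemma T_full : T (n - l) = ~: low.
Proof. apply/setP=> x; rewrite in_T inE in_low; have := ltn_ord x; lia. Qed.

Lemma ST_low (S : {set 'I_n}) t : S \subset low -> (S :|: T t) :&: low = S.
Proof.
move=> HS; apply/setP=> x; rewrite !inE; case: (boolP (x \in S)) => Hx /=.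
  by have := subsetP HS x Hx; rewrite in_low => ->.
lia.
Qed.

Lemma ST_high (S : {set 'I_n}) t : S \subset low -> (S :|: T t) :\: low = T t.
Proof.
move=> HS; apply/setP=> x; rewrite !inE; case: (boolP (x \in S)) => Hx /=.
  have := subsetP HS x Hx; rewrite in_low; lia.
lia.
Qed.

Lemma card_low : #|low| = l.
Proof.
have Hle : l <= n by exact: ltnW.
have -> : low = widen_ord Hle @: [set: 'I_l].
  apply/setP=> x; rewrite in_low; apply/idP/imsetP.
    move=> Hx; exists (Ordinal Hx); rewrite ?inE //; exact: val_inj.
  by case=> y _ ->; rewrite /= ltn_ord.
rewrite card_imset ?cardsT ?card_ord //.
by move=> a b /(congr1 val) /= H; apply: val_inj.
Qed.

Lemma T_inj a b : a <= n - l -> b <= n - l -> T a = T b -> a = b.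
Proof.
wlog Hab : a b / a < b.
  move=> W Ha Hb E; case: (ltngtP a b) => H; [exact: W|symmetry; exact: W|by []].
move=> Ha Hb E.
have Hx : l + a < n by lia.
have : Ordinal Hx \in T b by rewrite in_T /=; lia.
by rewrite -E in_T /=; lia.
Qed.

Definition rep (X : {set 'I_n}) := exists (S : {set 'I_n}) (t : nat), [/\ S \subset low, t <= n - l,
  X = S :|: T t, 0 < t -> m <= #|S| & t < n - l -> #|S| <= m].

Lemma memF X : X \in famF n l <-> rep X.
Proof.
split.
  rewrite /famF !inE => /orP[/orP[HJ|HK]|HL].
  - move: HJ; rewrite Hm1 => /andP[HS Hc].
    by exists X, 0; split => //; rewrite T0 setU0.
  - move: HK => /existsP[t /existsP[S /and4P[Ht HS /eqP Hc /eqP ->]]].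
    exists S, t; split => //; [lia| by rewrite Hc Hm1 ..].
  - move: HL => /existsP[S /and3P[HS Hc /eqP ->]].
    exists S, (n - l); split => //; [|by rewrite Hm2 in Hc; move=> _; apply: ltnW|by rewrite ltnn].
    by rewrite subnKC // ltnW.
case=> S [t [HS Ht -> H1 H2]].
rewrite /famF !inE.
case: (posnP t) => [Ht0|Htp].
  subst t; rewrite T0 setU0 HS Hm1 /= H2 //; lia.
case: (eqVneq #|S| m) => Hc.
  apply/orP; left; apply/orP; right.
  have Ht' : t < n.+1 by lia.
  apply/existsP; exists (Ordinal Ht'); apply/existsP; exists S.
  by rewrite /= Htp Ht HS Hc Hm1 !eqxx.
have Htn : t = n - l.
  case: (ltngtP t (n - l)) => // H; last (by move: Ht; rewrite leqNgt H).
  by move: (H2 H) (H1 Htp) Hc => a b; rewrite eqn_leq a b.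
apply/orP; right; apply/existsP; exists S.
rewrite HS Hm2 Htn (subnKC (ltnW Hln)) eqxx andbT /=.
by rewrite ltn_neqAle eq_sym Hc H1.
Qed.


Lemma F_key (X Y : {set 'I_n}) : rep X -> rep Y ->
  X :&: low \subset Y :&: low -> X \subset Y \/ Y \subset X.
Proof.
case=> S [t [HS Ht -> H1 H2]]; case=> S' [u [HS' Hu -> H1' H2']].
rewrite !ST_low // => HSS.
case: (leqP t u) => Htu; first by left; rewrite setUSS // T_sub.
have HE : S = S'.
  apply/eqP; rewrite eqEcard HSS /=.
  have := H1 (leq_ltn_trans (leq0n _) Htu); have := H2' (leq_trans Htu Ht); move=> a b; exact: leq_trans a b.
by right; rewrite HE setUSS // T_sub // ltnW.
Qed.

Lemma noAC k : l = m.*2.+1 -> k = 'C(l, m) -> ~ has_induced_antichain k.+1 (famF n l).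
Proof.
move=> Hl Hk [f [Hinj [Hin Hsub]]].
have key : forall i j, f i :&: low \subset f j :&: low -> i = j.
  move=> i j H.
  case: (F_key (proj1 (memF _) (Hin i)) (proj1 (memF _) (Hin j)) H) => H'.
    by apply/Hsub.
  by symmetry; apply/Hsub.
pose P := [set f i :&: low | i : 'I_k.+1].
have HP : #|P| = k.+1.
  rewrite card_imset ?card_ord // => i j E; apply: key; by rewrite E.
have H1 : forall A, A \in P -> A \subset low.
  by move=> A /imsetP[i _ ->]; apply: subsetIr.
have H2 : antichainS P.
  move=> A B /imsetP[i _ ->] /imsetP[j _ ->] H; by rewrite (key _ _ H).
have := @sperner _ m low P (etrans card_low Hl) H1 H2.
by rewrite -Hl -Hk HP ltnn.
Qed.

Lemma prefix_R (R : {set 'I_n}) : R \subset ~: low ->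
  (forall t, t <= n - l -> R \subset T t \/ T t \subset R) ->
  exists s, s <= n - l /\ R = T s.
Proof.
move=> HR HD.
have step : forall t, t <= n - l -> T t \subset R \/ exists s, s <= n - l /\ R = T s.
  elim=> [|t IH] Ht; first by left; rewrite T0 sub0set.
  case: (IH (ltnW Ht)) => [HT|]; last by right.
  case: (boolP (T t.+1 \subset R)) => [H0|HN]; first by left.
  have HR1 : R \subset T t.+1 by case: (HD t.+1 Ht) => // H; rewrite H in HN.
  right; exists t; split; first exact: ltnW.
  apply/eqP; rewrite eqEsubset HT andbT.
  apply/subsetP=> x Hx; move: (subsetP HR1 x Hx); rewrite !in_T => /andP[a b].
  rewrite a /= ltn_neqAle -ltnS -addnS b andbT; apply/eqP => Exl.
  apply: (negP HN); apply/subsetP=> y; rewrite in_T => /andP[c d].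
  case: (ltnP y (l + t)) => e.
    by apply: (subsetP HT); rewrite in_T c e.
  have Eyx : y = x.
    apply: val_inj => /=; rewrite addnS in d.
    lia.
  rewrite Eyx.
  exact: Hx.
case: (step (n - l) (leqnn _)) => // HT.
exists (n - l); split => //; apply/eqP; rewrite eqEsubset HT andbT T_full //.
Qed.

Lemma find_t (X : {set 'I_n}) : X \notin famF n l -> exists t, t <= n - l /\
  forall S' : {set 'I_n}, S' \subset low -> #|S'| = m ->
    ~~ (X \subset S' :|: T t) && ~~ (S' :|: T t \subset X).
Proof.
move=> HXF.
set S := X :&: low; set R := X :\: low.
have HX : X = S :|: R by rewrite /S /R setID.
have HS : S \subset low by apply: subsetIr.
have HR : R \subset ~: low by rewrite /R setDE subsetIr.
have notF : forall t, t <= n - l -> R = T t -> (0 < t -> m <= #|S|) ->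
    (t < n - l -> #|S| <= m) -> False.
  move=> t Ht ER H1 H2; apply: (negP HXF); apply/memF.
  by exists S, t; split => //; rewrite HX ER.
have P1 : forall (S' : {set 'I_n}) t, S' \subset low -> X \subset S' :|: T t ->
    S \subset S' /\ R \subset T t.
  move=> S' t HS' H; split.
    by rewrite -(ST_low t HS') /S setSI.
  by rewrite -(ST_high t HS') /R setSD.
have P2 : forall (S' : {set 'I_n}) t, S' \subset low -> S' :|: T t \subset X ->
    S' \subset S /\ T t \subset R.
  move=> S' t HS' H; split.
    by rewrite -(ST_low t HS') /S setSI.
  by rewrite -(ST_high t HS') /R setSD.
case: (ltngtP m #|S|) => Hc.
- exists (n - l); split => // S' HS' HS'c; apply/andP; split; apply/negP => H.
    have [H3 _] := P1 _ _ HS' H; have := subset_leq_card H3; rewrite HS'c; lia.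
  have [_ H4] := P2 _ _ HS' H.
  apply: (notF (n - l)) => //; last by rewrite ltnn.
    by apply/eqP; rewrite eqEsubset H4 andbT T_full.
  by move=> _; apply: ltnW.
- exists 0; split => // S' HS' HS'c; apply/andP; split; apply/negP => H.
    have [_ H4] := P1 _ _ HS' H.
    apply: (notF 0) => //; first by apply/eqP; rewrite eqEsubset H4 T0 sub0set.
    by move=> _; apply: ltnW.
  have [H3 _] := P2 _ _ HS' H; have := subset_leq_card H3; rewrite HS'c; lia.
- case: (boolP [exists t : 'I_(n - l).+1, ~~ (R \subset T t) && ~~ (T t \subset R)]).
    move=> /existsP[t /andP[a b]]; exists t; split; first by rewrite -ltnS ltn_ord.
    move=> S' HS' _; apply/andP; split; apply/negP => H.
      by have [_ H4] := P1 _ _ HS' H; rewrite H4 in a.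
    by have [_ H4] := P2 _ _ HS' H; rewrite H4 in b.
  move=> /existsPn HN.
  have [s [Hs ER]] : exists s, s <= n - l /\ R = T s.
    apply: prefix_R => // t Ht.
    have Ht' : t < (n - l).+1 by [].
    move: (HN (Ordinal Ht')); rewrite /= negb_and !negbK => /orP[]; by [left|right].
  by exfalso; apply: (notF s) => //; rewrite Hc.
Qed.

Lemma satF k : l = m.*2.+1 -> k = 'C(l, m) -> forall G : {set {set 'I_n}},
  famF n l \proper G -> has_induced_antichain k.+1 G.
Proof.
move=> Hl Hk G /properP [HFG [X HXG HXF]].
have [t [Ht Hinc]] := find_t HXF.
pose E := [set S : {set 'I_n} | S \subset low & #|S| == m].
pose s := enum E.
have Hs : size s = k by rewrite /s -cardE /E cards_draws card_low Hk.
have HsE : forall i, i < k -> nth set0 s i \in E.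
  by move=> i Hi; rewrite -mem_enum mem_nth // Hs.
pose f := fun i : 'I_k.+1 => if i < k then nth set0 s i :|: T t else X.
have Hsub : forall i j, i = j <-> f i \subset f j.
  move=> i j; split; first by move->.
  rewrite /f; case: ifP => Hi; case: ifP => Hj H.
  - move: (HsE i Hi) (HsE j Hj); rewrite !inE => /andP[a /eqP b] /andP[c /eqP d].
    have H' := setSI low H; rewrite !ST_low // in H'.
    have Heq : nth set0 s i = nth set0 s j by apply/eqP; rewrite eqEcard H' b d /=.
    have Hi' : i < size s by rewrite Hs.
    have Hj' : j < size s by rewrite Hs.
    apply: val_inj => /=; apply/eqP.
    by rewrite -(nth_uniq set0 Hi' Hj' (enum_uniq (mem E))) Heq.
  - move: (HsE i Hi); rewrite !inE => /andP[a /eqP b].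
    by have := Hinc _ a b; rewrite H andbF.
  - move: (HsE j Hj); rewrite !inE => /andP[a /eqP b].
    by have := Hinc _ a b; rewrite H.
  - apply: val_inj => /=; move/negbT: Hi; move/negbT: Hj.
    have := ltn_ord i; have := ltn_ord j; lia.
exists f; split; first by move=> i j E'; apply/Hsub; rewrite E'.
split => //.
move=> i; rewrite /f; case: ifP => Hi //.
apply: (subsetP HFG); apply/memF.
move: (HsE i Hi); rewrite !inE => /andP[a /eqP b].
by exists (nth set0 s i), t; split => //; rewrite b.
Qed.

Lemma seg_full : segment n l n = ~: low.
Proof. by rewrite -T_full subnKC // ltnW. Qed.

Lemma cardF : #|famF n l| = 2 ^ l + (n - l) * 'C(l, m).
Proof.
pose Jset := [set S : {set 'I_n} | S \subset low & #|S| <= m].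
pose Lset := [set S : {set 'I_n} | S \subset low & m < #|S|].
pose E := [set S : {set 'I_n} | S \subset low & #|S| == m].
have HJ : famJ n l = Jset by rewrite /famJ Hm1.
have HL : famL n l = (fun S => S :|: ~: low) @: Lset.
  apply/setP=> X; apply/idP/imsetP.
    rewrite /famL inE => /existsP[S /and3P[HS Hc /eqP ->]].
    by exists S; rewrite ?inE ?HS -?Hm2 ?seg_full.
  case=> S; rewrite inE => /andP[HS Hc] ->; rewrite /famL inE; apply/existsP; exists S.
  by rewrite HS Hm2 Hc seg_full eqxx.
have HK : famK n l = (fun p : {set 'I_n} * 'I_(n - l) => p.1 :|: T (p.2).+1) @:
            setX E [set: 'I_(n - l)].
  apply/setP=> X; apply/idP/imsetP.
    rewrite /famK inE => /existsP[t /existsP[S /and4P[Ht HS Hc /eqP ->]]].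
    have Ht' : t.-1 < n - l by lia.
    exists (S, Ordinal Ht'); first by rewrite !inE HS -Hm1 Hc.
    by rewrite /= prednK //; lia.
  case=> [[S i]]; rewrite !inE => /andP[/andP[HS Hc] _] ->.
  have Hi : i.+1 < n.+1 by have := ltn_ord i; lia.
  apply/existsP; exists (Ordinal Hi); apply/existsP; exists S.
  rewrite /= HS Hm1 Hc eqxx andbT /=; have := ltn_ord i; lia.
have cL : #|famL n l| = #|Lset|.
  rewrite HL card_in_imset // => S S'; rewrite !inE => /andP[HS _] /andP[HS' _] E'.
  by rewrite -(ST_low (n - l) HS) -(ST_low (n - l) HS') T_full E'.
have cK : #|famK n l| = 'C(l, m) * (n - l).
  rewrite HK card_in_imset ?cardsX ?cardsT ?card_ord ?cards_draws ?card_low //.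
  move=> [S i] [S' j]; rewrite !inE /= => /andP[/andP[HS _] _] /andP[/andP[HS' _] _] E'.
  have E1 := congr1 (fun X => X :&: low) E'; have E2 := congr1 (fun X => X :\: low) E'.
  rewrite /= !ST_low // in E1; rewrite /= !ST_high // in E2.
  have Eij : i = j.
    apply: val_inj; apply: succn_inj; apply: T_inj E2; have := ltn_ord i; have := ltn_ord j; lia.
  by rewrite E1 Eij.
have cJL : #|Jset| + #|Lset| = 2 ^ l.
  rewrite -card_low -card_powerset -(cardsID [set S : {set 'I_n} | #|S| <= m] (powerset low)).
  congr (_ + _); apply: eq_card => S; rewrite !inE // -ltnNge andbC //.
have lo_nlow : Ordinal Hln \notin low by rewrite in_low /= ltnn.
have HJK : famJ n l :&: famK n l = set0.
  apply/setP=> X; rewrite in_setI in_set0; apply/negbTE/negP => /andP[HX HX'].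
  move: HX'; rewrite HK => /imsetP[[S0 i] _ EX].
  move: HX; rewrite HJ inE => /andP[HXl _].
  have : Ordinal Hln \in X by rewrite EX !inE /=; lia.
  by move=> /(subsetP HXl); rewrite (negbTE lo_nlow).
have HJKL : (famJ n l :|: famK n l) :&: famL n l = set0.
  apply/setP=> X; rewrite in_setI in_setU in_set0; apply/negbTE/negP => /andP[HX HX'].
  move: HX'; rewrite HL => /imsetP[S1 HS1 EX].
  move: HS1; rewrite inE => /andP[HS Hc].
  case/orP: HX => HX.
    move: HX; rewrite HJ inE => /andP[HXl _].
    have : Ordinal Hln \in X by rewrite EX in_setU in_setC lo_nlow orbT.
    by move=> /(subsetP HXl); rewrite (negbTE lo_nlow).
  move: HX; rewrite HK => /imsetP[[S2 i] HS2 EX'].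
  move: HS2; rewrite !inE => /andP[/andP[HS' /eqP Hc'] _].
  have := congr1 (fun X => X :&: low) EX'; rewrite EX /= -T_full !ST_low // => ES.
  by move: Hc; rewrite ES Hc' ltnn.
rewrite /famF cardsU HJKL cards0 subn0 cardsU HJK cards0 subn0 cL cK HJ.
by rewrite -cJL mulnC addnAC.
Qed.
End Fam.

Lemma C_ge m : m.*2.+1 <= 'C(m.*2.+1, m).
Proof.
pose P := [set [set x] | x : 'I_(m.*2.+1)].
have HP : #|P| = m.*2.+1.
  by rewrite card_imset ?card_ord //; move=> x y /set1_inj.
rewrite -{1}HP.
apply: (@sperner _ m [set: 'I_(m.*2.+1)]); first by rewrite cardsT card_ord.
  by move=> A _; apply: subsetT.
move=> A B /imsetP[x _ ->] /imsetP[y _ ->]; rewrite sub1set inE => /eqP -> //.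
Qed.

Lemma bigmin_le (I : finType) d (P : pred I) (F : I -> nat) x :
  P x -> \big[minn/d]_(i | P i) F i <= F x.
Proof.
move=> Hx.
have : x \in index_enum I by rewrite mem_index_enum.
elim: (index_enum I) => //= y s IH; rewrite inE big_cons => /orP[/eqP <-|Hs].
  by rewrite Hx geq_minl.
case: (P y); last exact: IH.
exact: leq_trans (geq_minr _ _) (IH Hs).
Qed.

Theorem mainTheorem2 (l k n : nat) (Hodd : odd l) (Hl : 3 <= l)
    (Hk : k = 'C(l, (l.-1)./2)) (Hn : k < n) :
  induced_antichain_saturated k.+1 (famF n l) /\
  #|famF n l| = 2 ^ l + (n - l) * k /\
  isat_antichain n k.+1 <= 2 ^ l + (n - l) * k.
Proof.
set m := (l.-1)./2 in Hk *.
have Hh : l./2.*2 = l.-1 := odd_halfK Hodd.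
have Hm : m = l./2 by rewrite /m -Hh half_double.
have Hlm : l = m.*2.+1 by rewrite Hm Hh prednK // (leq_trans _ Hl).
have Hm1 : (l.-1)./2 = m by [].
have Hm2 : (l.+1)./2 = m.+1 by rewrite Hlm -doubleS half_double.
have Hln : l < n.
  apply: leq_ltn_trans Hn; rewrite Hk {1}Hlm.
  have := C_ge m; by rewrite -Hlm.
have HF : induced_antichain_saturated k.+1 (famF n l).
  split; first exact: (noAC Hm1 Hm2 Hln Hlm Hk).
  exact: (satF Hm1 Hm2 Hln Hlm Hk).
have HC : #|famF n l| = 2 ^ l + (n - l) * k by rewrite (cardF Hm1 Hm2 Hln) Hk.
split => //; split => //.
rewrite /isat_antichain -HC; apply: bigmin_le.
by rewrite /sat_b; case: (excluded_middle_informative _).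
Qed.
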